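(* Let $G$ be a graph and let $S$ be a dual general position set of $G$. Then the central vertex of any induced subgraph of $G$ isomorphic to $K_{1,3}$ does not belong to $S$.
   Context: For $S\subseteq V(G)$, two vertices $u,v$ are $S$-positionable if every shortest $u,v$-path $P$ satisfies $V(P)\cap S\subseteq\{u,v\}$. $S$ is a general position set if every two vertices of $S$ are $S$-positionable, and $S$ is a dual general position set if it is a general position set and every two vertices $u,v\in V(G)\setminus S$ are $S$-positionable. *)

(* Defs.v *)
From mathcomp Require Import all_boot.
Set Implicit Arguments. Unset Strict Implicit. Unset Printing Implicit Defensive.

Definition simple_graph (T : finType) (e : rel T) : Prop :=
  symmetric e /\ irreflexive e.

(* A u,v-path (walk) is the vertex sequence u :: p, each consecutive pair
   adjacent, ending at v; its length is size p. *)
Definition uv_path (T : finType) (e : rel T) (u v : T) (p : seq T) : bool :=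
  path e u p && (last u p == v).

(* A shortest u,v-path: a u,v-path of minimum length among all u,v-paths
   (such a walk is automatically a path, i.e. without repeated vertices). *)
Definition shortest_path (T : finType) (e : rel T) (u v : T) (p : seq T) : Prop :=
  uv_path e u v p /\ forall q, uv_path e u v q -> size p <= size q.

Definition S_positionable (T : finType) (e : rel T) (S : {set T}) (u v : T) : Prop :=
  forall p, shortest_path e u v p ->
    forall x, x \in u :: p -> x \in S -> x = u \/ x = v.

Definition general_position_set (T : finType) (e : rel T) (S : {set T}) : Prop :=
  forall u v, u \in S -> v \in S -> u != v -> S_positionable e S u v.

Definition dual_general_position_set (T : finType) (e : rel T) (S : {set T}) : Prop :=
  general_position_set e S /\
  forall u v, u \notin S -> v \notin S -> u != v -> S_positionable e S u v.

Definition induced_claw (T : finType) (e : rel T) (c a1 a2 a3 : T) : Prop :=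
  uniq [:: c; a1; a2; a3] /\
  [/\ e c a1, e c a2 & e c a3] /\
  [/\ ~~ e a1 a2, ~~ e a1 a3 & ~~ e a2 a3].

(* Main.v *)
Require Import Defs.
From mathcomp Require Import all_boot.

Lemma claw_pair (T : finType) (e : rel T) (S : {set T}) (c x y : T) :
  symmetric e -> c \in S -> c != x -> c != y -> x != y ->
  e c x -> e c y -> ~~ e x y -> ~ S_positionable e S x y.
Proof.
move=> sym cS cx cy xy ecx ecy nexy H.
have sp : shortest_path e x y [:: c; y].
  split.
    by rewrite /uv_path /= sym ecx ecy /=.
  move=> [|z [|w q]] //=.
    by rewrite /uv_path /= => /eqP E; rewrite E eqxx in xy.
  by rewrite /uv_path /= => /andP [/andP [exz _] /eqP E]; rewrite -E exz in nexy.
have := H _ sp c; rewrite !inE eqxx orbT => /(_ isT cS).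
by case=> E; rewrite E eqxx in cx cy.
Qed.

Arguments claw_pair {T e S c x y}.

Theorem mainTheorem8 (T : finType) (e : rel T) (S : {set T}) :
  simple_graph e -> dual_general_position_set e S ->
  forall c a1 a2 a3 : T, induced_claw e c a1 a2 a3 -> c \notin S.
Proof.
move=> [sym irr] [gp dgp] c a1 a2 a3 [U [[e1 e2 e3] [n12 n13 n23]]].
apply/negP => cS.
move: U => /= /andP [U1 /andP [U2 /andP [U3 _]]].
move: U1 U2 U3; rewrite !inE !negb_or => /andP [c1 /andP [c2 c3]] /andP [d12 d13] d23.
have P : forall x y, x != y -> ((x \in S) = (y \in S)) -> S_positionable e S x y.
  move=> x y xy; case: (boolP (x \in S)) => xS; case: (boolP (y \in S)) => yS //= _.
    exact: gp.
  exact: dgp.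
case: (boolP (a1 \in S)) => s1; case: (boolP (a2 \in S)) => s2;
  case: (boolP (a3 \in S)) => s3;
  try (by apply: (claw_pair sym cS c1 c2 d12 e1 e2 n12); apply: (P _ _ d12); move: s1 s2; case: (a1 \in S); case: (a2 \in S));
  try (by apply: (claw_pair sym cS c1 c3 d13 e1 e3 n13); apply: (P _ _ d13); move: s1 s3; case: (a1 \in S); case: (a3 \in S));
  try (by apply: (claw_pair sym cS c2 c3 d23 e2 e3 n23); apply: (P _ _ d23); move: s2 s3; case: (a2 \in S); case: (a3 \in S)).
Qed.
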